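(* In a Gaussian layered relay network with layers $0,1,\dots,L$ (as in the context) operating the amplify-and-forward scheme under the individual power constraints $E[x_k^2]\le P_k^{Up}$ at every relay $k$, the optimal achievable rate $R_{opt}$ satisfies $$R_{opt}\le \min_{l_0=1,2,\dots,L}\ \frac12\log_2\Big(1+\sum_{k\in\mathcal L_{l_0}}P_{R,k}\Big).$$
   Context: Layer $\mathcal L_0=\{S\}$ contains the source, layer $\mathcal L_L=\{D\}$ the destination, and layers $\mathcal L_1,\dots,\mathcal L_{L-1}$ contain relay nodes. Every node $k\in\mathcal L_{l+1}$ receives $y_k=\sum_{j\in\mathcal L_l}h_{j,k}x_j+z_k$, where all channel gains $h_{j,k}$ are fixed positive reals, $x_j$ is the signal sent by node $j$, and the noises $z_k\sim\mathcal N(0,1)$ are independent across non-source nodes and independent of the source signal. The source sends Gaussian codewords with input $x_S\sim\mathcal N(0,P_S)$, $P_S\le P_S^{Up}$. Each relay $k$ transmits $x_k=\beta_k y_k$ with a real amplification gain $\beta_k$ (instantaneous relaying), and the gains must satisfy the power constraints $E[x_k^2]\le P_k^{Up}$. By linearity, $y_D=f_{S,D}x_S+\sum_{j\text{ relay}}f_{j,D}z_j+z_D$ for real coefficients determined by the gains and channel gains, and the achievable rate of a gain choice is $\frac12\log_2\big(1+f_{S,D}^2P_S/(\sum_j f_{j,D}^2+1)\big)$; $R_{opt}$ is the supremum of this rate over all gain choices satisfying the power constraints. For every node $k$ in layer $l\ge1$, $P_{R,k}=\big(\sum_{j\in\mathcal L_{l-1}}h_{j,k}\sqrt{P_j^{Up}}\big)^2$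 (with $P_S^{Up}$ used for the source). *)

(* Defs.v *)
From Stdlib Require Import Reals Arith.
From Coquelicot Require Import Coquelicot.
Open Scope R_scope.

(* Layered network description.
   - layers 0..L; layer l has [n l] nodes, indexed 0 .. n l - 1;
   - layer 0 = {S} (n 0 = 1, S = node 0), layer L = {D} (n L = 1, D = node 0);
   - [h l j k] = channel gain from node j of layer l to node k of layer l+1;
   - [PUp l j] = power upper bound P^Up of node j of layer l (l < L);
   - [beta l k] = amplification gain of relay k of layer l (1 <= l <= L-1). *)

Fixpoint sumR (m : nat) (f : nat -> R) : R :=
  match m with
  | O => 0
  | S m' => sumR m' f + f m'
  end.

Section Network.
Variables (n : nat -> nat) (h : nat -> nat -> nat -> R) (beta : nat -> nat -> R).

(* Coefficient of x_S in the transmitted signal x_{l,j}. *)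
Fixpoint txS (l j : nat) : R :=
  match l with
  | O => 1
  | S l' => beta (S l') j * sumR (n l') (fun a => h l' a j * txS l' a)
  end.

(* Coefficient of x_S in the received signal y_{l,k} (l >= 1). *)
Definition rxS (l k : nat) : R :=
  match l with
  | O => 0
  | S l' => sumR (n l') (fun a => h l' a k * txS l' a)
  end.

(* Indicator that the noise z_{m,i} is the noise of node (l,k). *)
Definition noise_ind (m i l k : nat) : R :=
  if andb (Nat.eqb l m) (Nat.eqb k i) then 1 else 0.

(* Coefficient of the noise z_{m,i} in the transmitted signal x_{l,j}. *)
Fixpoint txN (m i l j : nat) : R :=
  match l with
  | O => 0
  | S l' => beta (S l') j *
            (sumR (n l') (fun a => h l' a j * txN m i l' a) + noise_ind m i (S l') j)
  end.

(* Coefficient of the noise z_{m,i} in the received signal y_{l,k} (l >= 1). *)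
Definition rxN (m i l k : nat) : R :=
  match l with
  | O => 0
  | S l' => sumR (n l') (fun a => h l' a k * txN m i l' a) + noise_ind m i l k
  end.

(* Sum of squared coefficients of the relay noises z_{m,i}, 1 <= m <= M,
   in y_{l,k}. *)
Definition noise_energy (M l k : nat) : R :=
  sumR (S M) (fun m => if Nat.eqb m 0 then 0
                       else sumR (n m) (fun i => (rxN m i l k) ^ 2)).

(* E[x_{l,k}^2] for relay (l,k): x = beta * y, with x_S ~ N(0,PS) and
   independent unit-variance noises. *)
Definition relay_power (PS : R) (l k : nat) : R :=
  (beta l k) ^ 2 * ((rxS l k) ^ 2 * PS + noise_energy l l k).

End Network.

Definition log2 (x : R) : R := ln x / ln 2.

Definition feasible (L : nat) (n : nat -> nat) (h : nat -> nat -> nat -> R)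
  (PUp : nat -> nat -> R) (PS : R) (beta : nat -> nat -> R) : Prop :=
  forall l k, (1 <= l)%nat -> (l < L)%nat -> (k < n l)%nat ->
    relay_power n h beta PS l k <= PUp l k.

(* Achievable rate of a gain choice:
   y_D = f_{S,D} x_S + sum_{relays j} f_{j,D} z_j + z_D. *)
Definition AF_rate (L : nat) (n : nat -> nat) (h : nat -> nat -> nat -> R)
  (PS : R) (beta : nat -> nat -> R) : R :=
  / 2 * log2 (1 + (rxS n h beta L 0) ^ 2 * PS
                  / (noise_energy n h beta (L - 1) L 0 + 1)).

Definition R_opt (L : nat) (n : nat -> nat) (h : nat -> nat -> nat -> R)
  (PUp : nat -> nat -> R) (PS : R) : Rbar :=
  Lub_Rbar (fun r => exists beta, feasible L n h PUp PS beta /\ r = AF_rate L n h PS beta).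

Definition P_R (n : nat -> nat) (h : nat -> nat -> nat -> R)
  (PUp : nat -> nat -> R) (l k : nat) : R :=
  (sumR (n (pred l)) (fun j => h (pred l) j k * sqrt (PUp (pred l) j))) ^ 2.

Definition layer_bound (n : nat -> nat) (h : nat -> nat -> nat -> R)
  (PUp : nat -> nat -> R) (l0 : nat) : R :=
  / 2 * log2 (1 + sumR (n l0) (fun k => P_R n h PUp l0 k)).

(* min_{l = 1..m} f l  (for m >= 1; value f 1 for m = 0, never used). *)
Fixpoint min_1_to (m : nat) (f : nat -> R) : R :=
  match m with
  | O => f 1%nat
  | S m' => match m' with
            | O => f 1%nat
            | S _ => Rmin (min_1_to m' f) (f m)
            end
  end.

(* Main.v *)
Require Import Defs.
From Stdlib Require Import Reals Arith Lra Lia Psatz.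
From Coquelicot Require Import Coquelicot.
Open Scope R_scope.

From Stdlib Require Import Lra Lia Psatz.
Lemma sumR_ext m f g : (forall k, (k < m)%nat -> f k = g k) -> sumR m f = sumR m g.
Proof. induction m; simpl; intros H; auto. rewrite IHm by (intros; apply H; lia). rewrite H by lia. auto. Qed.
Lemma sumR_le m f g : (forall k, (k < m)%nat -> f k <= g k) -> sumR m f <= sumR m g.
Proof. induction m; simpl; intros H; [lra|]. assert (sumR m f <= sumR m g) by (apply IHm; intros; apply H; lia). specialize (H m ltac:(lia)). lra. Qed.
Lemma sumR_zero m : sumR m (fun _ => 0) = 0.
Proof. induction m; simpl; auto. rewrite IHm; lra. Qed.
Lemma sumR_nonneg m f : (forall k, (k < m)%nat -> 0 <= f k) -> 0 <= sumR m f.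
Proof. intros H. rewrite <- (sumR_zero m). apply sumR_le. auto. Qed.
Lemma sumR_mult_l c m f : c * sumR m f = sumR m (fun i => c * f i).
Proof. induction m; simpl; [lra|]. rewrite <- IHm. lra. Qed.
Lemma sumR_mult_r c m f : sumR m f * c = sumR m (fun i => f i * c).
Proof. induction m; simpl; [lra|]. rewrite <- IHm. lra. Qed.
Lemma sumR_plus m f g : sumR m (fun i => f i + g i) = sumR m f + sumR m g.
Proof. induction m; simpl; [lra|]. rewrite IHm. lra. Qed.
Lemma sumR_swap m p F : sumR m (fun a => sumR p (fun k => F a k)) = sumR p (fun k => sumR m (fun a => F a k)).
Proof. induction m; simpl. - rewrite sumR_zero; auto. - rewrite IHm. rewrite <- sumR_plus. auto. Qed.
Lemma sumR_abs m f : Rabs (sumR m f) <= sumR m (fun i => Rabs (f i)).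
Proof. induction m; simpl. - rewrite Rabs_R0; lra. - eapply Rle_trans. apply Rabs_triang. lra. Qed.
Lemma sumR_delta m j F : (j < m)%nat -> sumR m (fun k => (if Nat.eqb j k then 1 else 0) * F k) = F j.
Proof. induction m; simpl; intros H; [lia|]. destruct (Nat.eq_dec j m).
 - subst. rewrite Nat.eqb_refl. rewrite (sumR_ext _ _ (fun _ => 0)). rewrite sumR_zero; lra.
   intros k Hk. destruct (Nat.eqb_spec m k); [lia|lra].
 - rewrite IHm by lia. destruct (Nat.eqb_spec j m); [lia|lra]. Qed.
Lemma sumR_single M F l0 : (forall m, 0 <= F m) -> (l0 < M)%nat -> F l0 <= sumR M F.
Proof. induction M; simpl; intros H1 H2; [lia|]. destruct (Nat.eq_dec l0 M).
 - subst. assert (0 <= sumR M F) by (apply sumR_nonneg; auto). lra.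
 - specialize (IHM H1 ltac:(lia)). specialize (H1 M). lra. Qed.
Lemma CS m c g : (sumR m (fun k => c k * g k))^2 <= sumR m (fun k => c k ^2) * sumR m (fun k => g k ^2).
Proof. induction m; cbn [sumR]; [lra|].
 set (S := sumR m (fun k => c k * g k)) in *. set (A := sumR m (fun k => c k ^2)) in *.
 set (B := sumR m (fun k => g k ^2)) in *.
 assert (0 <= A) by (apply sumR_nonneg; intros; nra). assert (0 <= B) by (apply sumR_nonneg; intros; nra).
 set (x := c m) in *. set (y := g m) in *.
 assert (2 * Rabs (S*x*y) <= A*y^2 + B*x^2).
 { assert (Hsq: (2*Rabs (S*x*y))^2 <= (A*y^2+B*x^2)^2).
   { assert (E: (2*Rabs (S*x*y))^2 = 4*(S^2)*(x^2*y^2)).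
     { replace ((2*Rabs (S*x*y))^2) with (4*(Rabs (S*x*y))^2) by ring. rewrite pow2_abs. ring. }
     rewrite E.
     assert (0 <= x^2*y^2) by nra.
     assert (Ha: 0 <= (A*y^2 - B*x^2)^2) by apply pow2_ge_0.
     assert (Hb: S^2 * (x^2*y^2) <= A*B*(x^2*y^2)) by (apply Rmult_le_compat_r; auto).
     nra. }
   assert (0 <= A*y^2+B*x^2) by nra. assert (0 <= Rabs (S*x*y)) by apply Rabs_pos. nra. }
 assert (S*x*y <= Rabs (S*x*y)) by apply Rle_abs. nra. Qed.
Section Net.
Variables (n : nat -> nat) (h : nat -> nat -> nat -> R) (beta : nat -> nat -> R).

Lemma txN_zero m i l j : (l < m)%nat -> txN n h beta m i l j = 0.
Proof. revert j; induction l; intros j Hl; cbn [txN]; auto.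
 rewrite (sumR_ext _ _ (fun _ => 0)) by (intros; rewrite IHl by lia; ring).
 rewrite sumR_zero. unfold noise_ind. replace (Nat.eqb (S l) m) with false by (symmetry; apply Nat.eqb_neq; lia).
 simpl. ring. Qed.

Lemma noise_ind_ne m i l k : l <> m -> noise_ind m i l k = 0.
Proof. intros H. unfold noise_ind. replace (Nat.eqb l m) with false by (symmetry; apply Nat.eqb_neq; lia). reflexivity. Qed.

Lemma lin l0 d j : (1 <= l0)%nat -> (j < n (l0 + d))%nat ->
  txS n h beta (l0 + d) j = sumR (n l0) (fun k => txN n h beta l0 k (l0 + d) j * rxS n h beta l0 k).
Proof. intros Hl0. revert j. induction d; intros j Hj.
 - rewrite Nat.add_0_r in *. destruct l0 as [|p]; [lia|].
   cbn [txS]. transitivity (beta (S p) j * rxS n h beta (S p) j). reflexivity.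
   rewrite <- (sumR_delta (n (S p)) j (fun k => beta (S p) j * rxS n h beta (S p) k)) by auto.
   apply sumR_ext. intros k Hk. cbn [txN].
   rewrite (sumR_ext _ _ (fun _ => 0)) by (intros; rewrite txN_zero by lia; ring).
   rewrite sumR_zero. unfold noise_ind. rewrite Nat.eqb_refl. simpl.
   destruct (Nat.eqb_spec j k); subst; ring.
 - rewrite Nat.add_succ_r in *. cbn [txS txN].
   rewrite (sumR_ext _ _ (fun a => sumR (n l0) (fun k => h (l0+d)%nat a j * txN n h beta l0 k (l0 + d) a * rxS n h beta l0 k))).
   2:{ intros a Ha. rewrite IHd by auto. rewrite sumR_mult_l. apply sumR_ext; intros; ring. }
   rewrite sumR_swap, sumR_mult_l. apply sumR_ext. intros k Hk.
   rewrite noise_ind_ne by lia. rewrite Rplus_0_r, Rmult_assoc, sumR_mult_r.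
   reflexivity.
Qed.

Lemma lin_D L l0 : (1 <= l0)%nat -> (l0 < L)%nat ->
  rxS n h beta L 0 = sumR (n l0) (fun k => rxN n h beta l0 k L 0 * rxS n h beta l0 k).
Proof. intros H1 H2. destruct L as [|q]; [lia|].
 cbn [rxS rxN].
 assert (Eq: q = (l0 + (q - l0))%nat) by lia. set (d := (q - l0)%nat) in *. clearbody d. subst q.
 rewrite (sumR_ext _ _ (fun a => sumR (n l0) (fun k => h (l0 + d)%nat a 0%nat * txN n h beta l0 k (l0 + d) a * rxS n h beta l0 k))).
 2:{ intros a Ha. rewrite lin by auto. rewrite sumR_mult_l. apply sumR_ext; intros; ring. }
 rewrite sumR_swap. apply sumR_ext. intros k Hk.
 rewrite noise_ind_ne by lia. rewrite Rplus_0_r, sumR_mult_r. reflexivity.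
Qed.

End Net.
Lemma div_le a b c : 0 < c -> a <= b * c -> a / c <= b.
Proof. intros Hc H. unfold Rdiv. replace b with (b * c * / c) by (field; lra).
 apply Rmult_le_compat_r; [left; apply Rinv_0_lt_compat; auto | auto]. Qed.

Lemma noise_energy_nonneg n h beta M l k : 0 <= noise_energy n h beta M l k.
Proof. unfold noise_energy. apply sumR_nonneg. intros m _. destruct (Nat.eqb m 0); [lra|].
 apply sumR_nonneg. intros; apply pow2_ge_0. Qed.

Lemma noise_energy_ge n h beta M L l0 : (1 <= l0)%nat -> (l0 <= M)%nat ->
  sumR (n l0) (fun i => rxN n h beta l0 i L 0 ^ 2) <= noise_energy n h beta M L 0.
Proof. intros H1 H2. unfold noise_energy.
 set (F := fun m => if Nat.eqb m 0 then 0 else sumR (n m) (fun i => rxN n h beta m i L 0 ^ 2)).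
 replace (sumR (n l0) (fun i => rxN n h beta l0 i L 0 ^ 2)) with (F l0).
 apply sumR_single; [|lia]. intros m. unfold F. destruct (Nat.eqb m 0); [lra|].
 apply sumR_nonneg. intros; apply pow2_ge_0.
 unfold F. replace (Nat.eqb l0 0) with false by (symmetry; apply Nat.eqb_neq; lia). reflexivity. Qed.

Section Main.
Variables (L : nat) (n : nat -> nat) (h : nat -> nat -> nat -> R)
  (PUp : nat -> nat -> R) (PS : R)
  (HL : (1 <= L)%nat)
  (Hn0 : n 0%nat = 1%nat) (HnL : n L = 1%nat)
  (Hh : forall l j k, (l < L)%nat -> (j < n l)%nat -> (k < n (S l))%nat -> 0 < h l j k)
  (HPS0 : 0 <= PS) (HPS : PS <= PUp 0%nat 0%nat)
  (beta : nat -> nat -> R) (Hf : feasible L n h PUp PS beta).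

Lemma tx_bound l a : (l < L)%nat -> (a < n l)%nat ->
  Rabs (txS n h beta l a) * sqrt PS <= sqrt (PUp l a).
Proof. intros Hl Ha. destruct l as [|p].
 - rewrite Hn0 in Ha. replace a with 0%nat by lia. cbn [txS]. rewrite Rabs_R1, Rmult_1_l.
   apply sqrt_le_1_alt; auto.
 - assert (Hp := Hf (S p) a ltac:(lia) Hl Ha). unfold relay_power in Hp.
   assert (E: txS n h beta (S p) a = beta (S p) a * rxS n h beta (S p) a) by reflexivity.
   assert (0 <= noise_energy n h beta (S p) (S p) a) by apply noise_energy_nonneg.
   assert (0 <= beta (S p) a ^ 2) by apply pow2_ge_0.
   assert (Hle: txS n h beta (S p) a ^ 2 * PS <= PUp (S p) a).
   { rewrite E. eapply Rle_trans; [|apply Hp]. 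
     assert (0 <= beta (S p) a ^ 2 * noise_energy n h beta (S p) (S p) a) by (apply Rmult_le_pos; auto).
     replace ((beta (S p) a * rxS n h beta (S p) a) ^ 2 * PS) with
       (beta (S p) a ^ 2 * (rxS n h beta (S p) a ^ 2 * PS)) by ring. lra. }
   apply sqrt_le_1_alt in Hle. rewrite sqrt_mult_alt in Hle by apply pow2_ge_0.
   rewrite <- pow2_abs, sqrt_pow2 in Hle by apply Rabs_pos. auto.
Qed.

Lemma sig_bound l0 : (1 <= l0)%nat -> (l0 <= L)%nat ->
  sumR (n l0) (fun k => rxS n h beta l0 k ^ 2) * PS <= sumR (n l0) (fun k => P_R n h PUp l0 k).
Proof. intros H1 H2. rewrite sumR_mult_r. apply sumR_le. intros k Hk.
 destruct l0 as [|p]; [lia|]. unfold P_R. cbn [pred rxS].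
 set (T := sumR (n p) (fun j => h p j k * sqrt (PUp p j))).
 set (r := sumR (n p) (fun a => h p a k * txS n h beta p a)).
 assert (Hr: Rabs r * sqrt PS <= T).
 { eapply Rle_trans. apply Rmult_le_compat_r. apply sqrt_pos. apply sumR_abs.
   rewrite sumR_mult_r. apply sumR_le. intros a Ha.
   rewrite Rabs_mult. assert (Hpos := Hh p a k ltac:(lia) Ha Hk).
   rewrite (Rabs_pos_eq (h p a k)) by lra. rewrite Rmult_assoc.
   apply Rmult_le_compat_l; [lra|]. apply tx_bound; lia. }
 assert (0 <= Rabs r * sqrt PS) by (apply Rmult_le_pos; [apply Rabs_pos|apply sqrt_pos]).
 assert (E: r ^ 2 * PS = (Rabs r * sqrt PS) ^ 2).
 { rewrite Rpow_mult_distr, pow2_abs. rewrite <- (sqrt_sqrt PS) at 1 by auto. ring. }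
 rewrite E. apply pow_incr. auto.
Qed.

Lemma rate_bound l0 : (1 <= l0)%nat -> (l0 <= L)%nat ->
  AF_rate L n h PS beta <= layer_bound n h PUp l0.
Proof. intros H1 H2.
 set (f := rxS n h beta L 0). set (N := noise_energy n h beta (L - 1) L 0).
 set (G := sumR (n l0) (fun k => rxS n h beta l0 k ^ 2)).
 assert (HN : 0 <= N) by apply noise_energy_nonneg.
 assert (HG : 0 <= G) by (apply sumR_nonneg; intros; apply pow2_ge_0).
 assert (Hsig := sig_bound l0 H1 H2). fold G in Hsig.
 assert (Hfg : f ^ 2 * PS <= G * PS * (N + 1)).
 { destruct (Nat.eq_dec l0 L).
   - subst l0. unfold G. rewrite HnL. cbn [sumR]. rewrite Rplus_0_l. fold f.
     assert (0 <= f^2 * PS) by (apply Rmult_le_pos; auto; apply pow2_ge_0). nra.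
   - set (Cc := sumR (n l0) (fun k => rxN n h beta l0 k L 0 ^ 2)).
     assert (HC : Cc <= N) by (apply noise_energy_ge; lia).
     assert (Hcs : f ^ 2 <= Cc * G).
     { unfold f. rewrite (lin_D n h beta L l0) by lia. apply CS. }
     assert (0 <= G * PS) by (apply Rmult_le_pos; auto).
     assert (f ^ 2 * PS <= Cc * G * PS) by (apply Rmult_le_compat_r; auto).
     assert (Cc * G * PS <= N * (G * PS)).
     { replace (Cc * G * PS) with (Cc * (G * PS)) by ring. apply Rmult_le_compat_r; auto. }
     nra. }
 assert (HX : f ^ 2 * PS / (N + 1) <= G * PS) by (apply div_le; lra).
 assert (HX0 : 0 <= f ^ 2 * PS / (N + 1)).
 { unfold Rdiv. apply Rmult_le_pos. apply Rmult_le_pos; auto; apply pow2_ge_0.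
   left; apply Rinv_0_lt_compat; lra. }
 unfold AF_rate, layer_bound, log2. fold f N.
 apply Rmult_le_compat_l; [lra|]. unfold Rdiv. apply Rmult_le_compat_r.
 - left; apply Rinv_0_lt_compat. rewrite <- ln_1. apply ln_increasing; lra.
 - apply ln_le; lra.
Qed.
End Main.

Lemma min_1_to_glb (r : R) f m : (1 <= m)%nat -> (forall l, (1 <= l)%nat -> (l <= m)%nat -> r <= f l) -> r <= min_1_to m f.
Proof. induction m as [|m IH]; intros Hm H; [lia|].
 destruct m as [|m']. - cbn. apply H; lia.
 - change (min_1_to (S (S m')) f) with (Rmin (min_1_to (S m') f) (f (S (S m')))).
   apply Rmin_glb. apply IH; [lia|]. intros; apply H; lia. apply H; lia. Qed.

Theorem theorem1
  (L : nat) (n : nat -> nat) (h : nat -> nat -> nat -> R)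
  (PUp : nat -> nat -> R) (PS : R)
  (HL : (1 <= L)%nat)
  (Hn0 : n 0%nat = 1%nat) (HnL : n L = 1%nat)
  (Hnrel : forall l, (1 <= l)%nat -> (l < L)%nat -> (1 <= n l)%nat)
  (Hh : forall l j k, (l < L)%nat -> (j < n l)%nat -> (k < n (S l))%nat -> 0 < h l j k)
  (HPS0 : 0 <= PS) (HPS : PS <= PUp 0%nat 0%nat) :
  Rbar_le (R_opt L n h PUp PS)
          (Finite (min_1_to L (fun l0 => layer_bound n h PUp l0))).
Proof.
 unfold R_opt. destruct (Lub_Rbar_correct (fun r => exists beta, feasible L n h PUp PS beta /\ r = AF_rate L n h PS beta)) as [_ Hlub].
 apply Hlub. intros r [beta [Hf Hr]]. subst r. simpl.
 apply min_1_to_glb; auto. intros l0 H1 H2.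
 eapply rate_bound; eauto.
Qed.
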